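(* Let $k\geq 1$, let $\Lambda$ be a row-finite $k$-graph with no sources, and let $R$ be a commutative ring with $1$. Let $\mathrm{KP}_R(\Lambda)$ be the Kumjian-Pask algebra of $\Lambda$ over $R$ and $Z(\mathrm{KP}_R(\Lambda))$ its center. (1) If $\Lambda$ is aperiodic and cofinal and $\Lambda^0$ is finite, then $\mathrm{KP}_R(\Lambda)$ has an identity $1_{\mathrm{KP}_R(\Lambda)}$ and $Z(\mathrm{KP}_R(\Lambda))=R\,1_{\mathrm{KP}_R(\Lambda)}=\{r1_{\mathrm{KP}_R(\Lambda)}: r\in R\}$. (2) If $\Lambda$ is cofinal and $\Lambda^0$ is infinite, then $Z(\mathrm{KP}_R(\Lambda))=\{0\}$.
   Context: $\mathbb{N}^k$ is regarded as a category with one object, composition being addition. A $k$-graph is a countable category $\Lambda$ together with a functor $d:\Lambda\to\mathbb{N}^k$ (the degree) with the unique factorization property: whenever $d(\lambda)=m+n$ there are unique $\mu,\nu\in\Lambda$ with $d(\mu)=m$, $d(\nu)=n$, $\lambda=\mu\nu$. Objects are identified with morphisms of degree $0$ and called vertices; $\Lambda^0$ is the set of vertices, $\Lambda^n=d^{-1}(n)$, $r,s$ are the range and source maps, and $\lambda\mu$ is defined when $s(\lambda)=r(\mu)$. For $v\in\Lambda^0$, $v\Lambda^n=\{\lambda\in\Lambda^n:r(\lambda)=v\}$. $\Lambda$ is row-finite if $v\Lambda^n$ is finite for all $v,n$, and has no sources if $v\Lambda^n\neq\emptyset$ for all $v,n$. For $\lambda\in\Lambda$ and $0\le m\le n\le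 d(\lambda)$, $\lambda(m,n)$ denotes the unique path of degree $n-m$ with $\lambda=\lambda'\lambda(m,n)\lambda''$ where $d(\lambda')=m$, $d(\lambda'')=d(\lambda)-n$. Aperiodic: for every $v\in\Lambda^0$ and $m\neq n\in\mathbb{N}^k$ there is $\lambda$ with $r(\lambda)=v$, $d(\lambda)\geq m\vee n$ and $\lambda(m,m+d(\lambda)-(m\vee n))\neq\lambda(n,n+d(\lambda)-(m\vee n))$. Let $\Omega_k$ be the $k$-graph with objects $\mathbb{N}^k$, morphisms $\{(m,n):m\le n\}$, $r(m,n)=m$, $s(m,n)=n$, $d(m,n)=n-m$. An infinite path is a degree-preserving functor $x:\Omega_k\to\Lambda$; write $x(m)=x(m,m)$. $\Lambda$ is cofinal if for every infinite path $x$ and every $v\in\Lambda^0$ there is $m\in\mathbb{N}^k$ and a path $\lambda$ with $r(\lambda)=v$, $s(\lambda)=x(m)$. Let $\Lambda^{\neq0}$ be the paths of nonzero degree and introduce a formal symbol $\lambda^*$ for each $\lambda\in\Lambda^{\neq 0}$. A Kumjian-Pask $\Lambda$-family in an $R$-algebra $A$ consists of $P:\Lambda^0\to A$ and $S:\Lambda^{\neq0}\cup\{\lambda^*\}\to A$ such that: (KP1) the $P_v$ are mutually orthogonal idempotents; (KP2) for $\lambda,\mu\in\Lambda^{\ne0}$ with $r(\mu)=s(\lambda)$: $S_\lambda S_\mu=S_{\lambda\mu}$, $S_{\mu^*}S_{\lambda^*}=S_{(\lambda\mu)^*}$, $P_{r(\lambda)}S_\lambda=S_\lambda=S_\lambda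 P_{s(\lambda)}$, $P_{s(\lambda)}S_{\lambda^*}=S_{\lambda^*}=S_{\lambda^*}P_{r(\lambda)}$; (KP3) for $\lambda,\mu\in\Lambda^{\neq0}$ with $d(\lambda)=d(\mu)$, $S_{\lambda^*}S_\mu=\delta_{\lambda,\mu}P_{s(\lambda)}$; (KP4) for $v\in\Lambda^0$ and $n\neq0$, $P_v=\sum_{\lambda\in v\Lambda^n}S_\lambda S_{\lambda^*}$. $\mathrm{KP}_R(\Lambda)$ is the $R$-algebra generated by a Kumjian-Pask family $(p,s)$ that is universal: every Kumjian-Pask family in an $R$-algebra $A$ is the image of $(p,s)$ under a unique $R$-algebra homomorphism $\mathrm{KP}_R(\Lambda)\to A$. *)

(* Defs.v *)
From HB Require Import structures.
From mathcomp Require Import all_boot all_algebra.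
Set Implicit Arguments. Unset Strict Implicit. Unset Printing Implicit Defensive.
Import GRing.Theory.
Local Open Scope ring_scope.

Definition deg (k : nat) := {ffun 'I_k -> nat}.
Definition dzero k : deg k := [ffun _ => 0%N].
Definition dadd k (m n : deg k) : deg k := [ffun i => (m i + n i)%N].
Definition dsub k (m n : deg k) : deg k := [ffun i => (m i - n i)%N].
Definition djoin k (m n : deg k) : deg k := [ffun i => maxn (m i) (n i)].
Definition dle k (m n : deg k) : Prop := forall i, (m i <= n i)%N.

(* ---------- k-graphs ----------
   A countable category given by its (countable) type of morphisms, with
   objects identified with degree-0 morphisms (identities); composition
   [kcomp l m] = "l m" is total but only meaningful when [ks l = kr m]. *)
Record kgraph (k : nat) := KGraph {
  kpath : countType;
  kd : kpath -> deg k;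
  kr : kpath -> kpath;
  ks : kpath -> kpath;
  kcomp : kpath -> kpath -> kpath;
  kd_r : forall l, kd (kr l) = dzero k;
  kd_s : forall l, kd (ks l) = dzero k;
  kvert_r : forall v, kd v = dzero k -> kr v = v;
  kvert_s : forall v, kd v = dzero k -> ks v = v;
  kcomp_r : forall l m, ks l = kr m -> kr (kcomp l m) = kr l;
  kcomp_s : forall l m, ks l = kr m -> ks (kcomp l m) = ks m;
  kcomp_d : forall l m, ks l = kr m -> kd (kcomp l m) = dadd (kd l) (kd m);
  kcomp_idl : forall l, kcomp (kr l) l = l;
  kcomp_idr : forall l, kcomp l (ks l) = l;
  kcomp_assoc : forall l m n, ks l = kr m -> ks m = kr n ->
      kcomp (kcomp l m) n = kcomp l (kcomp m n);
  kfactor : forall l m n, kd l = dadd m n ->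
      exists! mn : kpath * kpath,
        [/\ ks mn.1 = kr mn.2, kd mn.1 = m, kd mn.2 = n & l = kcomp mn.1 mn.2]
}.

Section KGraphDefs.
Variables (k : nat) (G : kgraph k).
Local Notation P := (kpath G).
Local Notation d := (@kd k G).
Local Notation r := (@kr k G).
Local Notation s := (@ks k G).
Local Notation comp := (@kcomp k G).

Definition vertex (v : P) : Prop := d v = dzero k.
Definition nonzero_deg (l : P) : Prop := d l <> dzero k.

Definition row_finite : Prop :=
  forall v n, vertex v -> exists sq : seq P, forall l, r l = v -> d l = n -> l \in sq.
Definition no_sources : Prop :=
  forall v n, vertex v -> exists l, r l = v /\ d l = n.
Definition finite_vertices : Prop :=
  exists sq : seq P, forall v, vertex v -> v \in sq.

Definition segment (l : P) (m n : deg k) (mu : P) : Prop :=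
  exists l1 l2, [/\ d l1 = m, d mu = dsub n m, d l2 = dsub (d l) n,
                    s l1 = r mu & s mu = r l2 /\ l = comp l1 (comp mu l2)].

Definition aperiodic : Prop :=
  forall v, vertex v -> forall m n : deg k, m <> n ->
    exists l, [/\ r l = v, dle (djoin m n) (d l) &
      forall mu nu,
        segment l m (dadd m (dsub (d l) (djoin m n))) mu ->
        segment l n (dadd n (dsub (d l) (djoin m n))) nu -> mu <> nu].

(* infinite path: degree-preserving functor Omega_k -> Lambda, given by its
   values x m n = x(m,n) on the morphisms (m,n), m <= n, of Omega_k *)
Definition infinite_path (x : deg k -> deg k -> P) : Prop :=
  [/\ forall m n, dle m n -> d (x m n) = dsub n m,
      forall m n, dle m n -> r (x m n) = x m m /\ s (x m n) = x n n &
      forall m n q, dle m n -> dle n q -> x m q = comp (x m n) (x n q)].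

Definition cofinal : Prop :=
  forall x, infinite_path x -> forall v, vertex v ->
    exists (m : deg k) (l : P), r l = v /\ s l = x m m.
End KGraphDefs.

Record nualg (R : comPzRingType) := NUAlg {
  nua_car :> lmodType R;
  nua_mul : nua_car -> nua_car -> nua_car;
  nua_mulA : forall a b c, nua_mul a (nua_mul b c) = nua_mul (nua_mul a b) c;
  nua_mulDl : forall a b c, nua_mul (a + b) c = nua_mul a c + nua_mul b c;
  nua_mulDr : forall a b c, nua_mul a (b + c) = nua_mul a b + nua_mul a c;
  nua_mulZl : forall (x : R) a b, nua_mul (x *: a) b = x *: nua_mul a b;
  nua_mulZr : forall (x : R) a b, nua_mul a (x *: b) = x *: nua_mul a b
}.
Arguments nua_mul {R} _ _ _.

Definition nua_hom (R : comPzRingType) (A B : nualg R) (f : A -> B) : Prop :=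
  [/\ forall a b, f (a + b) = f a + f b,
      forall (x : R) a, f (x *: a) = x *: f a &
      forall a b, f (nua_mul A a b) = nua_mul B (f a) (f b)].

Definition central (R : comPzRingType) (A : nualg R) (z : A) : Prop :=
  forall a, nua_mul A z a = nua_mul A a z.

(* ---------- Kumjian-Pask families and the Kumjian-Pask algebra ----------
   p is only used on vertices, S and Sstar only on paths of nonzero degree;
   Sstar l stands for S_{l^*}. *)
Section KP.
Variables (k : nat) (G : kgraph k) (R : comPzRingType).
Local Notation P := (kpath G).
Local Notation d := (@kd k G).
Local Notation r := (@kr k G).
Local Notation s := (@ks k G).
Local Notation comp := (@kcomp k G).

Definition KP_family (A : nualg R) (p S Sstar : P -> A) : Prop :=
  let mul := nua_mul A in
  [/\
      forall v w, vertex v -> vertex w ->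
        mul (p v) (p w) = if v == w then p v else 0,
      (forall l m, nonzero_deg l -> nonzero_deg m -> r m = s l ->
         mul (S l) (S m) = S (comp l m) /\
         mul (Sstar m) (Sstar l) = Sstar (comp l m)),
      (forall l, nonzero_deg l ->
         [/\ mul (p (r l)) (S l) = S l, mul (S l) (p (s l)) = S l,
             mul (p (s l)) (Sstar l) = Sstar l &
             mul (Sstar l) (p (r l)) = Sstar l]),
      (forall l m, nonzero_deg l -> nonzero_deg m -> d l = d m ->
         mul (Sstar l) (S m) = if l == m then p (s l) else 0) &
      (* KP4 : the sum over the finite set v Lambda^n, listed without repetition *)
      forall v n, vertex v -> n <> dzero k ->
        forall sq : seq P, uniq sq ->
          (forall l, l \in sq <-> (r l = v /\ d l = n)) ->
          p v = \sum_(l <- sq) mul (S l) (Sstar l)].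

Definition KP_generated (A : nualg R) (p S Sstar : P -> A) : Prop :=
  forall X : A -> Prop,
    (forall v, vertex v -> X (p v)) ->
    (forall l, nonzero_deg l -> X (S l) /\ X (Sstar l)) ->
    X 0 ->
    (forall a b, X a -> X b -> X (a + b)) ->
    (forall (x : R) a, X a -> X (x *: a)) ->
    (forall a b, X a -> X b -> X (nua_mul A a b)) ->
    forall a, X a.

Definition KP_agree (A B : nualg R) (f : A -> B) (p S Sstar : P -> A)
  (q T Tstar : P -> B) : Prop :=
  (forall v, vertex v -> f (p v) = q v) /\
  (forall l, nonzero_deg l -> f (S l) = T l /\ f (Sstar l) = Tstar l).

Definition KP_universal (A : nualg R) (p S Sstar : P -> A) : Prop :=
  forall (B : nualg R) (q T Tstar : P -> B), KP_family q T Tstar ->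
    exists f : A -> B,
      [/\ nua_hom f, KP_agree f p S Sstar q T Tstar &
        forall g : A -> B, nua_hom g -> KP_agree g p S Sstar q T Tstar ->
          forall a, g a = f a].

Definition is_KP_algebra (A : nualg R) (p S Sstar : P -> A) : Prop :=
  [/\ KP_family p S Sstar, KP_generated p S Sstar & KP_universal p S Sstar].
End KP.

(* Main.v *)
Require Import Defs.
From HB Require Import structures.
From mathcomp Require Import all_boot all_algebra.
Import GRing.Theory.
Local Open Scope ring_scope.
From mathcomp Require Import zify.
From Stdlib Require Import ClassicalEpsilon Classical_Prop.

Module KPHelpers.
Set Implicit Arguments. Unset Strict Implicit. Unset Printing Implicit Defensive.
Local Close Scope ring_scope.

Section Deg.
Variable k : nat.
Lemma degP (f g : deg k) : (forall i, (f i = g i :> nat)) -> f = g.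
Proof. move=> h; apply/ffunP=> i; exact: h. Qed.
Lemma dle_refl (m : deg k) : dle m m. Proof. by move=> i. Qed.
Lemma dle_trans (m n q : deg k) : dle m n -> dle n q -> dle m q.
Proof. move=> h1 h2 i; exact: leq_trans (h1 i) (h2 i). Qed.
Lemma dle_add (m n : deg k) : dle m (dadd m n).
Proof. move=> i; rewrite ffunE; lia. Qed.
Lemma dadd_dsub (m n : deg k) : dle m n -> dadd m (dsub n m) = n.
Proof. move=> h; apply: degP => i; rewrite !ffunE; have := h i; lia. Qed.
Lemma dadd_inj (m x y : deg k) : dadd m x = dadd m y -> x = y.
Proof. move=> h; apply: degP => i; have := congr1 (fun f : deg k => f i) h; rewrite /= !ffunE; exact: addnI. Qed.
Lemma dadd0 (m : deg k) : dadd m (dzero k) = m.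
Proof. apply: degP => i; rewrite !ffunE; lia. Qed.
Lemma dsub_dadd (m n : deg k) : dsub (dadd m n) m = n.
Proof. apply: degP => i; rewrite !ffunE; lia. Qed.
Lemma dsubnn (m : deg k) : dsub m m = dzero k.
Proof. apply: degP => i; rewrite !ffunE; lia. Qed.
End Deg.

Section Graph.
Variables (k : nat) (G : kgraph k).
Local Notation P := (kpath G).
Local Notation d := (@kd k G).
Local Notation r := (@kr k G).
Local Notation s := (@ks k G).
Local Notation comp := (@kcomp k G).

Lemma vertex_r l : vertex (r l). Proof. exact: kd_r. Qed.
Lemma vertex_s l : vertex (s l). Proof. exact: kd_s. Qed.
Lemma rr l : r (r l) = r l. Proof. by apply: kvert_r; apply: kd_r. Qed.
Lemma sr l : s (r l) = r l. Proof. by apply: kvert_s; apply: kd_r. Qed.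
Lemma ss l : s (s l) = s l. Proof. by apply: kvert_s; apply: kd_s. Qed.
Lemma rs l : r (s l) = s l. Proof. by apply: kvert_r; apply: kd_s. Qed.

Lemma fac_uniq a b a' b' : s a = r b -> s a' = r b' -> d a = d a' ->
  comp a b = comp a' b' -> a = a' /\ b = b'.
Proof.
move=> h h' hd hc.
have hl : d (comp a b) = dadd (d a) (d b) by rewrite kcomp_d.
have hb : d b = d b'.
  by apply: (@dadd_inj _ (d a)); rewrite -hl hc kcomp_d // hd.
have [[x y] [_ U]] := kfactor hl.
have E1 := U (a, b) (And4 h erefl erefl erefl).
have E2 := U (a', b') (And4 h' (esym hd) (esym hb) hc).
by rewrite E1 in E2; case: E2.
Qed.

Definition fac (l : P) (m : deg k) : P * P :=
  epsilon (inhabits (l, l))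
    (fun ab => [/\ s ab.1 = r ab.2, d ab.1 = m & l = comp ab.1 ab.2]).
Definition pre l m := (fac l m).1.
Definition suf l m := (fac l m).2.

Lemma fac_spec l m : dle m (d l) ->
  [/\ s (pre l m) = r (suf l m), d (pre l m) = m & l = comp (pre l m) (suf l m)].
Proof.
move=> h; rewrite /pre /suf /fac.
pose Q := fun ab : P * P => [/\ s ab.1 = r ab.2, d ab.1 = m & l = comp ab.1 ab.2].
suff : Q (epsilon (inhabits (l, l)) Q) by [].
apply: epsilon_spec.
have e : d l = dadd m (dsub (d l) m) by rewrite dadd_dsub.
have [[x y] [[? ? ? ?] _]] := kfactor e.
by exists (x, y).
Qed.

Lemma fac_comp a b : s a = r b -> pre (comp a b) (d a) = a /\ suf (comp a b) (d a) = b.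
Proof.
move=> h.
have hl : dle (d a) (d (comp a b)) by rewrite kcomp_d //; apply: dle_add.
have [h1 h2 h3] := fac_spec hl.
have [e1 e2] := fac_uniq h h1 (esym h2) h3.
by rewrite -e1 -e2.
Qed.

Lemma pre_d l m : dle m (d l) -> d (pre l m) = m.
Proof. by case/fac_spec. Qed.
Lemma pre_suf l m : dle m (d l) -> s (pre l m) = r (suf l m).
Proof. by case/fac_spec. Qed.
Lemma pre_sufE l m : dle m (d l) -> l = comp (pre l m) (suf l m).
Proof. by case/fac_spec. Qed.
Lemma suf_d l m : dle m (d l) -> d (suf l m) = dsub (d l) m.
Proof.
move=> h; have [h1 h2 h3] := fac_spec h.
by rewrite {2}h3 kcomp_d // h2 dsub_dadd.
Qed.
Lemma pre_r l m : dle m (d l) -> r (pre l m) = r l.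
Proof. by move=> h; have [h1 h2 h3] := fac_spec h; rewrite {2}h3 kcomp_r. Qed.
Lemma suf_s l m : dle m (d l) -> s (suf l m) = s l.
Proof. by move=> h; have [h1 h2 h3] := fac_spec h; rewrite {2}h3 kcomp_s. Qed.

Lemma pre0 l : pre l (dzero k) = r l.
Proof.
have := @fac_comp (r l) l (sr l). by rewrite kcomp_idl kd_r; case.
Qed.
Lemma suf0 l : suf l (dzero k) = l.
Proof.
have := @fac_comp (r l) l (sr l). by rewrite kcomp_idl kd_r; case.
Qed.

Lemma fac_compl L L' m : s L = r L' -> dle m (d L) ->
  pre (comp L L') m = pre L m /\ suf (comp L L') m = comp (suf L m) L'.
Proof.
move=> h hm; have [h1 h2 h3] := fac_spec hm.
have hs : s (suf L m) = r L' by rewrite suf_s.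
have E : comp L L' = comp (pre L m) (comp (suf L m) L').
  by rewrite {1}h3 kcomp_assoc.
have h1' : s (pre L m) = r (comp (suf L m) L') by rewrite kcomp_r.
have := fac_comp h1'; rewrite -E h2; case=> -> ->; done.
Qed.

Lemma fac_add l m n : dle (dadd m n) (d l) ->
  pre l (dadd m n) = comp (pre l m) (pre (suf l m) n) /\
  suf l (dadd m n) = suf (suf l m) n /\ dle n (d (suf l m)).
Proof.
move=> h.
have hm : dle m (d l) by apply: dle_trans h; apply: dle_add.
have hn : dle n (d (suf l m)).
  rewrite suf_d // => i; have := h i; rewrite !ffunE; lia.
have [a1 a2 a3] := fac_spec hm.
have [b1 b2 b3] := fac_spec hn.
have c1 : s (pre l m) = r (pre (suf l m) n) by rewrite pre_r.
have E : l = comp (comp (pre l m) (pre (suf l m) n)) (suf (suf l m) n).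
  by rewrite kcomp_assoc; [rewrite -b3 | exact: c1 | exact: b1].
have c2 : s (comp (pre l m) (pre (suf l m) n)) = r (suf (suf l m) n)
  by rewrite kcomp_s.
have := fac_comp c2; rewrite -E kcomp_d // a2 b2; case=> -> ->; done.
Qed.

Definition seg L m n := pre (suf L m) (dsub n m).

Lemma seg_dle L m n : dle m n -> dle n (d L) -> dle (dsub n m) (d (suf L m)).
Proof.
move=> h1 h2; rewrite suf_d; last exact: dle_trans h2.
move=> i; have := h1 i; have := h2 i; rewrite !ffunE; lia.
Qed.

Lemma seg_d L m n : dle m n -> dle n (d L) -> d (seg L m n) = dsub n m.
Proof. by move=> h1 h2; rewrite /seg pre_d //; apply: seg_dle. Qed.

Lemma seg_r L m n : dle m n -> dle n (d L) -> r (seg L m n) = seg L m m.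
Proof. by move=> h1 h2; rewrite /seg pre_r ?dsubnn ?pre0 //; apply: seg_dle. Qed.

Lemma seg_comp L m n q : dle m n -> dle n q -> dle q (d L) ->
  seg L m q = comp (seg L m n) (seg L n q) /\ s (seg L m n) = r (seg L n q).
Proof.
move=> h1 h2 h3.
have hmq : dle m q by apply: dle_trans h2.
have hm : dle m (d L) by apply: dle_trans hmq h3.
have E : dsub q m = dadd (dsub n m) (dsub q n).
  apply: degP => i; have := h1 i; have := h2 i; rewrite !ffunE; lia.
have hle : dle (dadd (dsub n m) (dsub q n)) (d (suf L m)) by rewrite -E; apply: seg_dle.
have [e1 [e2 _]] := fac_add hle.
have E2 : dadd m (dsub n m) = n by rewrite dadd_dsub.
have hle2 : dle (dadd m (dsub n m)) (d L) by rewrite E2; apply: dle_trans h3.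
have [_ [e3 _]] := fac_add hle2.
rewrite E2 in e3.
have hnm : dle (dsub n m) (d (suf L m)) by apply: seg_dle => //; apply: dle_trans h3.
have hqn : dle (dsub q n) (d (suf L n)) by apply: seg_dle.
rewrite /seg E e1 -e3; split=> //.
by rewrite pre_suf // pre_r // e3.
Qed.

Lemma seg_vertex L m n : dle m n -> dle n (d L) -> r (seg L n n) = seg L n n.
Proof.
move=> h1 h2; rewrite /seg dsubnn pre0 rr //.
Qed.

Lemma seg_s L m n : dle m n -> dle n (d L) -> s (seg L m n) = seg L n n.
Proof.
move=> h1 h2; have [_ ->] := seg_comp h1 (dle_refl n) h2.
exact: seg_vertex h1 h2.
Qed.

Lemma seg_ext L L' m n : s L = r L' -> dle m n -> dle n (d L) ->
  seg (comp L L') m n = seg L m n.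
Proof.
move=> h h1 h2.
have hm : dle m (d L) by apply: dle_trans h2.
have [_ e] := fac_compl h hm.
rewrite /seg e.
have hs : s (suf L m) = r L' by rewrite suf_s.
by have [-> _] := fac_compl hs (seg_dle h1 h2).
Qed.

Lemma pre_suf_ext al be m e : s al = r be -> dle (dadd m e) (d al) ->
  pre (suf (comp al be) m) e = pre (suf al m) e.
Proof.
move=> h hle.
have hm : dle m (d al) by apply: dle_trans hle; apply: dle_add.
have [_ ->] := fac_compl h hm.
have hs : s (suf al m) = r be by rewrite suf_s.
have he : dle e (d (suf al m)).
  rewrite suf_d // => i; have := hle i; rewrite !ffunE; lia.
by have [-> _] := fac_compl hs he.
Qed.

Lemma seg_ok al m e : dle (dadd m e) (d al) ->
  segment al m (dadd m e) (pre (suf al m) e).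
Proof.
move=> hle.
have hm : dle m (d al) by apply: dle_trans hle; apply: dle_add.
have he : dle e (d (suf al m)).
  rewrite suf_d // => i; have := hle i; rewrite !ffunE; lia.
exists (pre al m), (suf (suf al m) e); split.
- exact: pre_d.
- by rewrite pre_d // dsub_dadd.
- rewrite suf_d // suf_d //; apply: degP => i; rewrite !ffunE; lia.
- by rewrite pre_suf // pre_r.
- split; first exact: pre_suf.
  by rewrite -pre_sufE // -pre_sufE.
Qed.

Definition ndeg (N : nat) : deg k := [ffun _ => N].
Definition ones := ndeg 1.

Section Seq.
Variables (nx : P -> P) (u : P).
Fixpoint wseq n := if n is n'.+1 then s (nx (wseq n')) else u.
Fixpoint Lam n := if n is n'.+1 then comp (Lam n') (nx (wseq n')) else u.
Hypothesis hu : vertex u.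
Hypothesis hnx : forall n, r (nx (wseq n)) = wseq n /\ d (nx (wseq n)) = ones.

Lemma Lam_prop n : s (Lam n) = wseq n /\ d (Lam n) = ndeg n.
Proof.
elim: n => [|n [IH1 IH2]] /=.
  split; first exact: kvert_s.
  by rewrite hu; apply: degP => i; rewrite !ffunE.
have [h1 h2] := hnx n.
have c : s (Lam n) = r (nx (wseq n)) by rewrite IH1 h1.
rewrite kcomp_s // kcomp_d // IH2 h2; split=> //.
by apply: degP => i; rewrite !ffunE; lia.
Qed.

Lemma Lam_ext n j : exists t, s (Lam n) = r t /\ Lam (n + j) = comp (Lam n) t.
Proof.
elim: j => [|j [t [h1 h2]]].
  by exists (s (Lam n)); rewrite rs addn0 kcomp_idr.
have [e1 _] := hnx (n + j).
have [f1 _] := Lam_prop (n + j).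
have c : s t = r (nx (wseq (n + j))).
  by rewrite e1 -f1 h2 kcomp_s.
exists (comp t (nx (wseq (n + j)))); rewrite kcomp_r //; split=> //.
by rewrite addnS /= h2 kcomp_assoc.
Qed.

Lemma dle_ndeg q n n' : dle q (ndeg n) -> (n <= n')%N -> dle q (ndeg n').
Proof. move=> h hn i; have := h i; rewrite !ffunE; lia. Qed.

Lemma seg_Lam n n' m q : dle m q -> dle q (ndeg n) -> (n <= n')%N ->
  seg (Lam n') m q = seg (Lam n) m q.
Proof.
move=> h1 h2 hn; rewrite -(subnKC hn).
have [t [e1 e2]] := Lam_ext n (n' - n).
by rewrite e2 seg_ext // (proj2 (Lam_prop n)).
Qed.

Definition Nf (q : deg k) := (\max_(i < k) q i)%N.
Lemma dle_Nf q : dle q (ndeg (Nf q)).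
Proof. move=> i; rewrite ffunE /Nf; exact: (@leq_bigmax _ (fun i : 'I_k => q i)). Qed.

Definition xp (m q : deg k) := seg (Lam (Nf q)) m q.

Lemma xE m q n : dle m q -> dle q (ndeg n) -> xp m q = seg (Lam n) m q.
Proof.
move=> h1 h2; rewrite /xp -(@seg_Lam (Nf q) (maxn n (Nf q)) m q h1 (dle_Nf q) (leq_maxr _ _)).
by rewrite (@seg_Lam n (maxn n (Nf q)) m q h1 h2 (leq_maxl _ _)).
Qed.

Lemma xp_infinite : infinite_path xp.
Proof.
have dL n : d (Lam n) = ndeg n by have [] := Lam_prop n.
split.
- move=> m n h; rewrite (xE h (dle_Nf n)); apply: seg_d => //.
  by rewrite dL; apply: dle_Nf.
- move=> m n h.
  have h2 : dle n (d (Lam (Nf n))) by rewrite dL; apply: dle_Nf.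
  have h3 : dle m (ndeg (Nf n)) by apply: dle_trans h (dle_Nf n).
  rewrite (xE h (dle_Nf n)) (xE (dle_refl m) h3) (xE (dle_refl n) (dle_Nf n)).
  by rewrite seg_r // seg_s.
- move=> m n q h1 h2.
  have h3 : dle q (d (Lam (Nf q))) by rewrite dL; apply: dle_Nf.
  have h4 : dle n (ndeg (Nf q)) by apply: dle_trans h2 (dle_Nf q).
  rewrite (xE (dle_trans h1 h2) (dle_Nf q)) (xE h1 h4) (xE h2 (dle_Nf q)).
  by have [-> _] := seg_comp h1 h2 h3.
Qed.
End Seq.

Lemma all_vertices (H : P -> Prop) :
  cofinal G -> (exists w, vertex w /\ H w) -> (forall l, H (r l) -> H (s l)) ->
  (forall u, vertex u -> (forall l, r l = u -> d l = ones -> H (s l)) -> H u) ->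
  forall u, vertex u -> H u.
Proof.
move=> cof [w [vw Hw]] her sat u vu.
apply: Classical_Prop.NNPP => nHu.
have step : forall x, vertex x -> ~ H x ->
    exists l, [/\ r l = x, d l = ones & ~ H (s l)].
  move=> x vx nx; apply: Classical_Prop.NNPP => nex; apply: nx; apply: sat => // l hl hd.
  apply: Classical_Prop.NNPP => nh; apply: nex; by exists l.
pose nxt x := match excluded_middle_informative
   (exists l, [/\ r l = x, d l = ones & ~ H (s l)]) with
   | left e => proj1_sig (constructive_indefinite_description _ e)
   | right _ => x end.
have nxt_spec x : vertex x -> ~ H x ->
    [/\ r (nxt x) = x, d (nxt x) = ones & ~ H (s (nxt x))].
  rewrite /nxt; case: excluded_middle_informative => [e|n] vx hx.
    by case: constructive_indefinite_description.
  by exfalso; apply: n; apply: step.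
have inv n : vertex (wseq nxt u n) /\ ~ H (wseq nxt u n).
  elim: n => [|n [IH1 IH2]] //=.
  have [_ _ h3] := nxt_spec _ IH1 IH2.
  by split=> //; apply: vertex_s.
have hnx n : r (nxt (wseq nxt u n)) = wseq nxt u n /\ d (nxt (wseq nxt u n)) = ones.
  by have [a [b c _]] := (inv n, nxt_spec _ (inv n).1 (inv n).2).
have [m [l [hl1 hl2]]] := cof _ (xp_infinite vu hnx) w vw.
have Hx : H (xp nxt u m m) by rewrite -hl2; apply: her; rewrite hl1.
set L := Lam nxt u (Nf m) in Hx.
have hmL : dle m (d L) by rewrite (proj2 (Lam_prop vu hnx _)); apply: dle_Nf.
have E : xp nxt u m m = r (suf L m) by rewrite /xp /seg dsubnn pre0.
rewrite E in Hx; have := her _ Hx; rewrite suf_s // (proj1 (Lam_prop vu hnx _)).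
by apply: (inv _).2.
Qed.
End Graph.

Local Open Scope ring_scope.

Section Alg.
Variables (k : nat) (R : comPzRingType) (G : kgraph k) (A : nualg R).
Variables (p S Sstar : kpath G -> A).
Local Notation P := (kpath G).
Local Notation d := (@kd k G).
Local Notation r := (@kr k G).
Local Notation s := (@ks k G).
Local Notation comp := (@kcomp k G).
Local Notation mul := (nua_mul A).
Hypothesis hfam : KP_family p S Sstar.
Implicit Types (l rho v w : P) (n : deg k).

Lemma nmul0l a : mul 0 a = 0.
Proof. by apply: (addrI (mul 0 a)); rewrite [RHS]addr0 -nua_mulDl addr0. Qed.
Lemma nmul0r a : mul a 0 = 0.
Proof. by apply: (addrI (mul a 0)); rewrite [RHS]addr0 -nua_mulDr addr0. Qed.
Lemma mul_suml (I : Type) (sq : seq I) (F : I -> A) b :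
  mul (\sum_(i <- sq) F i) b = \sum_(i <- sq) mul (F i) b.
Proof. elim: sq => [|x sq IH]; rewrite ?big_nil ?nmul0l // !big_cons nua_mulDl IH //. Qed.
Lemma mul_sumr (I : Type) (sq : seq I) (F : I -> A) b :
  mul b (\sum_(i <- sq) F i) = \sum_(i <- sq) mul b (F i).
Proof. elim: sq => [|x sq IH]; rewrite ?big_nil ?nmul0r // !big_cons nua_mulDr IH //. Qed.

Definition Sh (l : P) := if d l == dzero k then p l else S l.
Definition Shs (l : P) := if d l == dzero k then p l else Sstar l.

Lemma Sh_v l : vertex l -> Sh l = p l. Proof. by rewrite /Sh /vertex => ->; rewrite eqxx. Qed.
Lemma Shs_v l : vertex l -> Shs l = p l. Proof. by rewrite /Shs /vertex => ->; rewrite eqxx. Qed.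
Lemma Sh_nv l : ~ vertex l -> Sh l = S l.
Proof. by rewrite /Sh /vertex; case: eqP. Qed.
Lemma Shs_nv l : ~ vertex l -> Shs l = Sstar l.
Proof. by rewrite /Shs /vertex; case: eqP. Qed.

Lemma vertexP l : vertex l \/ ~ vertex l.
Proof. rewrite /vertex; case: (d l =P dzero k); tauto. Qed.

Lemma p_mul v w : vertex v -> vertex w -> mul (p v) (p w) = if v == w then p v else 0.
Proof. by case: hfam => h *; apply: h. Qed.
Lemma p_idem v : vertex v -> mul (p v) (p v) = p v.
Proof. by move=> h; rewrite p_mul // eqxx. Qed.
Lemma p_orth v w : vertex v -> vertex w -> v <> w -> mul (p v) (p w) = 0.
Proof. by move=> h1 h2 h; rewrite p_mul //; case: eqP. Qed.

Lemma KP2b l : ~ vertex l ->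
  [/\ mul (p (r l)) (S l) = S l, mul (S l) (p (s l)) = S l,
      mul (p (s l)) (Sstar l) = Sstar l & mul (Sstar l) (p (r l)) = Sstar l].
Proof. by case: hfam => _ _ h _ _ hl; apply: h. Qed.

Lemma Sh_r l : mul (p (r l)) (Sh l) = Sh l.
Proof.
case: (vertexP l) => h.
  by rewrite Sh_v // kvert_r // p_idem.
by rewrite Sh_nv //; case: (KP2b h).
Qed.
Lemma Sh_s l : mul (Sh l) (p (s l)) = Sh l.
Proof.
case: (vertexP l) => h.
  by rewrite Sh_v // kvert_s // p_idem.
by rewrite Sh_nv //; case: (KP2b h).
Qed.
Lemma Shs_s l : mul (p (s l)) (Shs l) = Shs l.
Proof.
case: (vertexP l) => h.
  by rewrite Shs_v // kvert_s // p_idem.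
by rewrite Shs_nv //; case: (KP2b h).
Qed.
Lemma Shs_r l : mul (Shs l) (p (r l)) = Shs l.
Proof.
case: (vertexP l) => h.
  by rewrite Shs_v // kvert_r // p_idem.
by rewrite Shs_nv //; case: (KP2b h).
Qed.

Lemma dadd_eq0 (x y : deg k) : dadd x y = dzero k -> x = dzero k.
Proof.
move=> h; apply: degP => i; have := congr1 (fun f : deg k => f i) h.
rewrite /= !ffunE; lia.
Qed.
Lemma dadd_eq0r (x y : deg k) : dadd x y = dzero k -> y = dzero k.
Proof.
move=> h; apply: degP => i; have := congr1 (fun f : deg k => f i) h.
rewrite /= !ffunE; lia.
Qed.

Lemma comp_nv a b : s a = r b -> ~ vertex a -> ~ vertex (comp a b).
Proof. by rewrite /vertex => h ha; rewrite kcomp_d // => /dadd_eq0. Qed.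

Lemma Sh_comp a b : s a = r b -> mul (Sh a) (Sh b) = Sh (comp a b).
Proof.
move=> h; case: (vertexP a) => ha.
  have ea : a = r b by rewrite -h kvert_s.
  by rewrite Sh_v // ea Sh_r kcomp_idl.
case: (vertexP b) => hb.
  have eb : b = s a by rewrite h kvert_r.
  by rewrite (Sh_v hb) eb Sh_s kcomp_idr.
rewrite !Sh_nv //; last exact: comp_nv.
by case: hfam => _ h2 _ _ _; case: (h2 a b ha hb (esym h)).
Qed.

Lemma Shs_comp a b : s a = r b -> mul (Shs b) (Shs a) = Shs (comp a b).
Proof.
move=> h; case: (vertexP a) => ha.
  have ea : a = r b by rewrite -h kvert_s.
  by rewrite (Shs_v ha) ea Shs_r kcomp_idl.
case: (vertexP b) => hb.
  have eb : b = s a by rewrite h kvert_r.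
  by rewrite (Shs_v hb) eb Shs_s kcomp_idr.
rewrite !Shs_nv //; last exact: comp_nv.
by case: hfam => _ h2 _ _ _; case: (h2 a b ha hb (esym h)).
Qed.

Lemma KP3g a b : d a = d b -> mul (Shs a) (Sh b) = if a == b then p (s a) else 0.
Proof.
move=> hd; case: (vertexP a) => ha.
  have hb : vertex b by rewrite /vertex -hd.
  by rewrite Shs_v // Sh_v // p_mul // kvert_s.
have hb : ~ vertex b by rewrite /vertex -hd.
rewrite Shs_nv // Sh_nv //.
by case: hfam => _ _ _ h3 _; apply: h3.
Qed.

Lemma Shs_Sh_pre rho l : dle (d l) (d rho) ->
  mul (Shs rho) (Sh l) = if pre rho (d l) == l then Shs (suf rho (d l)) else 0.
Proof.
move=> h; have [h1 h2 h3] := fac_spec h.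
set a := pre rho (d l) in h1 h2 h3 *; set b := suf rho (d l) in h1 h2 h3 *.
rewrite h3 -Shs_comp // -nua_mulA KP3g //.
case: eqP => _; last by rewrite nmul0r.
by rewrite h1 Shs_r.
Qed.

Lemma Shs_Sh_pre' rho l : dle (d l) (d rho) ->
  mul (Shs l) (Sh rho) = if pre rho (d l) == l then Sh (suf rho (d l)) else 0.
Proof.
move=> h; have [h1 h2 h3] := fac_spec h.
set a := pre rho (d l) in h1 h2 h3 *; set b := suf rho (d l) in h1 h2 h3 *.
rewrite h3 -Sh_comp // nua_mulA KP3g //.
rewrite [l == _]eq_sym; case: eqP => [e|_]; last by rewrite nmul0l.
by rewrite -e h1 Sh_r.
Qed.

Lemma KP4g v n sq : vertex v -> n <> dzero k -> uniq sq ->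
  (forall l, l \in sq <-> (r l = v /\ d l = n)) ->
  p v = \sum_(l <- sq) mul (Sh l) (Shs l).
Proof.
move=> hv hn hu hsq.
case: hfam => _ _ _ _ h4; rewrite (h4 v n hv hn sq hu hsq).
apply: eq_big_seq => l /hsq [_ hl].
by rewrite Sh_nv ?Shs_nv // /vertex hl.
Qed.

Lemma paths_list v n : row_finite G -> vertex v ->
  exists sq, uniq sq /\ (forall l, l \in sq <-> (r l = v /\ d l = n)).
Proof.
move=> rf hv; have [sq0 h] := rf v n hv.
exists (undup [seq l <- sq0 | (r l == v) && (d l == n)]); split; first exact: undup_uniq.
move=> l; rewrite mem_undup mem_filter; split.
  by case/andP => /andP [/eqP -> /eqP ->].
by case=> h1 h2; rewrite h1 h2 !eqxx /=; apply: h.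
Qed.


Lemma Sh_Sh_0 l m : s l <> r m -> mul (Sh l) (Sh m) = 0.
Proof.
move=> h; rewrite -Sh_s -(Sh_r m) nua_mulA -(nua_mulA (Sh l)).
by rewrite p_orth ?nmul0r ?nmul0l //; apply: kd_s || apply: kd_r.
Qed.
Lemma Shs_Shs_0 l m : s m <> r l -> mul (Shs l) (Shs m) = 0.
Proof.
move=> h; rewrite -Shs_r -(Shs_s m) nua_mulA -(nua_mulA (Shs l)).
by rewrite p_orth ?nmul0r ?nmul0l //; [apply: kd_r | apply: kd_s | move=> e; apply: h].
Qed.
Lemma Shs_Sh_0 l m : r l <> r m -> mul (Shs l) (Sh m) = 0.
Proof.
move=> h; rewrite -Shs_r -(Sh_r m) nua_mulA -(nua_mulA (Shs l)).
by rewrite p_orth ?nmul0r ?nmul0l //; apply: kd_r.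
Qed.

Inductive Span : A -> Prop :=
| Sp0 : Span 0
| SpM l m : Span (mul (Sh l) (Shs m))
| SpD a b : Span a -> Span b -> Span (a + b)
| SpZ (x : R) a : Span a -> Span (x *: a).

Lemma Span_sum (I : Type) (sq : seq I) (F : I -> A) :
  (forall i, Span (F i)) -> Span (\sum_(i <- sq) F i).
Proof.
move=> h; elim: sq => [|x sq IH]; rewrite ?big_nil ?big_cons; first exact: Sp0.
exact: SpD.
Qed.

Lemma Span_sum_seq (sq : seq P) (F : P -> A) :
  (forall i, i \in sq -> Span (F i)) -> Span (\sum_(i <- sq) F i).
Proof.
elim: sq => [|x sq IH] h; rewrite ?big_nil ?big_cons; first exact: Sp0.
apply: SpD; first by apply: h; rewrite mem_head.
by apply: IH => i hi; apply: h; rewrite in_cons hi orbT.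
Qed.

Lemma left_Sh l a : Span a -> Span (mul (Sh l) a).
Proof.
elim=> [|g e|a1 a2 _ IH1 _ IH2|x a1 _ IH].
- rewrite nmul0r; exact: Sp0.
- rewrite nua_mulA; case: (s l =P r g) => h.
    by rewrite Sh_comp //; apply: SpM.
  by rewrite Sh_Sh_0 // nmul0l; apply: Sp0.
- by rewrite nua_mulDr; apply: SpD.
- by rewrite nua_mulZr; apply: SpZ.
Qed.

Lemma right_Shs m a : Span a -> Span (mul a (Shs m)).
Proof.
elim=> [|g e|a1 a2 _ IH1 _ IH2|x a1 _ IH].
- rewrite nmul0l; exact: Sp0.
- rewrite -nua_mulA; case: (s m =P r e) => h.
    by rewrite Shs_comp //; apply: SpM.
  by rewrite Shs_Shs_0 // nmul0r; apply: Sp0.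
- by rewrite nua_mulDl; apply: SpD.
- by rewrite nua_mulZl; apply: SpZ.
Qed.

Hypothesis rowfin : row_finite G.

Lemma Shs_Sh_span mu al : Span (mul (Shs mu) (Sh al)).
Proof.
case: (r mu =P r al) => hr; last by rewrite Shs_Sh_0 //; apply: Sp0.
set N := djoin (d mu) (d al).
have h1 : dle (d mu) N by move=> i; rewrite ffunE leq_maxl.
have h2 : dle (d al) N by move=> i; rewrite ffunE leq_maxr.
have hv : vertex (r mu) by apply: kd_r.
case: (N =P dzero k) => hN.
  have vm : vertex mu by apply: degP => i; have := h1 i; rewrite hN !ffunE; lia.
  have va : vertex al by apply: degP => i; have := h2 i; rewrite hN !ffunE; lia.
  have e1 : mu = r mu by rewrite kvert_r.
  have e2 : al = r mu by rewrite hr kvert_r.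
  rewrite Shs_v // Sh_v // e2 -e1 -{1}(Sh_v vm) -(Shs_v vm); apply: SpM.
have [sq [hu hsq]] := paths_list N rowfin hv.
rewrite -Shs_r (KP4g hv hN hu hsq) mul_sumr mul_suml.
apply: Span_sum_seq => rho hin.
rewrite !nua_mulA -(nua_mulA _ (Shs rho)).
have [_ hd] := (hsq rho).1 hin.
rewrite Shs_Sh_pre' ?hd // Shs_Sh_pre ?hd //.
case: eqP => _; last by rewrite nmul0l; apply: Sp0.
case: eqP => _; last by rewrite nmul0r; apply: Sp0.
exact: SpM.
Qed.

Lemma Span_mul a b : Span a -> Span b -> Span (mul a b).
Proof.
move=> ha hb; elim: ha => [|l m|a1 a2 _ IH1 _ IH2|x a1 _ IH].
- rewrite nmul0l; exact: Sp0.
- rewrite -nua_mulA; apply: left_Sh.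
  elim: hb => [|g e|b1 b2 _ IH1 _ IH2|x b1 _ IH].
  + rewrite nmul0r; exact: Sp0.
  + rewrite nua_mulA; apply: right_Shs; exact: Shs_Sh_span.
  + by rewrite nua_mulDr; apply: SpD.
  + by rewrite nua_mulZr; apply: SpZ.
- by rewrite nua_mulDl; apply: SpD.
- by rewrite nua_mulZl; apply: SpZ.
Qed.

Lemma all_span : KP_generated p S Sstar -> forall a, Span a.
Proof.
move=> hg; apply: hg.
- move=> v hv; rewrite -(p_idem hv) -{1}(Sh_v hv) -(Shs_v hv); exact: SpM.
- move=> l hl; split.
    have := SpM l (s l); rewrite Sh_nv // (Shs_v (vertex_s l)).
    by case: (KP2b hl) => _ e _ _; rewrite e.
  have := SpM (s l) l; rewrite Shs_nv // (Sh_v (vertex_s l)).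
  by case: (KP2b hl) => _ _ e _; rewrite e.
- exact: Sp0.
- by move=> *; apply: SpD.
- by move=> *; apply: SpZ.
- by move=> *; apply: Span_mul.
Qed.


Lemma ShsSh_split u v u' v' : s u = r v -> s u' = r v' ->
  mul (Shs (comp u v)) (Sh (comp u' v')) = mul (Shs v) (mul (mul (Shs u) (Sh u')) (Sh v')).
Proof.
move=> h h'; rewrite -Shs_comp // -Sh_comp //.
by rewrite -!nua_mulA.
Qed.

Hypothesis aper : aperiodic G.

Lemma Apx x y : s x = s y -> d x <> d y ->
  exists al, r al = s x /\ mul (Shs (comp x al)) (Sh (comp y al)) = 0.
Proof.
move=> hs hd.
have [al [h1 h2 h3]] := aper (vertex_s x) (nesym hd).
exists al; split=> //.
set J := djoin (d y) (d x) in h2 h3.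
set e := dsub (d al) J in h3.
have hJy : dle (d y) J by move=> i; rewrite ffunE leq_maxl.
have hJx : dle (d x) J by move=> i; rewrite ffunE leq_maxr.
have hey : dle (dadd (d y) e) (d al).
  move=> i; have := h2 i; have := hJy i; rewrite !ffunE; lia.
have hex : dle (dadd (d x) e) (d al).
  move=> i; have := h2 i; have := hJx i; rewrite !ffunE; lia.
have ne : pre (suf al (d y)) e <> pre (suf al (d x)) e.
  apply: h3; exact: seg_ok.
have hy : dle (d y) (d al) by apply: dle_trans hey; apply: dle_add.
have hx : dle (d x) (d al) by apply: dle_trans hex; apply: dle_add.
have [a1 a2 a3] := fac_spec hy.
have [b1 b2 b3] := fac_spec hx.
set a := pre al (d y) in a1 a2 a3; set b := suf al (d y) in a1 a2 a3 ne *.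
set a' := pre al (d x) in b1 b2 b3; set b' := suf al (d x) in b1 b2 b3 ne *.
have c1 : s x = r a by rewrite /a pre_r.
have c2 : s y = r a' by rewrite /a' pre_r // h1 hs.
have E1 : comp x al = comp (comp x a) b by rewrite {1}a3 kcomp_assoc.
have E2 : comp y al = comp (comp y a') b' by rewrite {1}b3 kcomp_assoc.
rewrite E1 E2 ShsSh_split ?kcomp_s //.
rewrite KP3g; last by rewrite !kcomp_d // a2 b2; apply: degP => i; rewrite !ffunE; lia.
case: eqP => _; last by rewrite nmul0l nmul0r.
rewrite kcomp_s // a1 nua_mulA Shs_r.
have hb : dle e (d b) by rewrite /b suf_d // => i; have := hey i; rewrite !ffunE; lia.
have hb' : dle e (d b') by rewrite /b' suf_d // => i; have := hex i; rewrite !ffunE; lia.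
have [d1 d2 d3] := fac_spec hb.
have [f1 f2 f3] := fac_spec hb'.
rewrite d3 f3 ShsSh_split // KP3g; last by rewrite d2 f2.
by case: eqP => // _; rewrite nmul0l nmul0r.
Qed.

Definition Good (a : A) := forall g : P, exists al, r al = s g /\ exists c : R,
  forall be, r be = s al ->
    mul (Shs (comp (comp g al) be)) (mul a (Sh (comp (comp g al) be))) = c *: p (s be).

Lemma Good0 : Good 0.
Proof.
move=> g; exists (s g); split; first exact: rs.
exists 0 => be hb; by rewrite nmul0l nmul0r scale0r.
Qed.

Lemma GoodZ x a : Good a -> Good (x *: a).
Proof.
move=> h g; have [al [h1 [c hc]]] := h g.
exists al; split=> //; exists (x * c) => be hb.
rewrite nua_mulZl nua_mulZr hc //; exact: scalerA.
Qed.

Lemma GoodD a b : Good a -> Good b -> Good (a + b).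
Proof.
move=> ha hb g; have [a1 [h1 [c1 hc1]]] := ha g.
have [a2 [h2 [c2 hc2]]] := hb (comp g a1).
rewrite kcomp_s // in h2.
exists (comp a1 a2); split; first by rewrite kcomp_r.
exists (c1 + c2) => be hbe.
rewrite kcomp_s // in hbe.
have e1 : s g = r a1 by [].
have e2 : s a1 = r a2 by [].
have e3 : s (comp g a1) = r a2 by rewrite kcomp_s.
have e4 : s a2 = r be by [].
have Eb : comp (comp g (comp a1 a2)) be = comp (comp (comp g a1) a2) be.
  by rewrite (kcomp_assoc e1 e2).
have Ea : comp (comp g (comp a1 a2)) be = comp (comp g a1) (comp a2 be).
  by rewrite Eb (kcomp_assoc e3 e4).
rewrite nua_mulDl nua_mulDr {1 2}Ea hc1; last by rewrite kcomp_r.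
rewrite Eb hc2 // kcomp_s //; symmetry; exact: scalerDl.
Qed.

Hypothesis nosrc : no_sources G.

Lemma Good_mono l m : Good (mul (Sh l) (Shs m)).
Proof.
move=> g.
set J := djoin (d l) (d m).
have [a0 [h01 h02]] := nosrc J (vertex_s g).
set g' := comp g a0.
have hJl : dle (d l) J by move=> i; rewrite ffunE leq_maxl.
have hJm : dle (d m) J by move=> i; rewrite ffunE leq_maxr.
have hg' : dle J (d g').
  by rewrite /g' kcomp_d // h02 => i; rewrite !ffunE; lia.
have hl : dle (d l) (d g') by apply: dle_trans hg'.
have hm : dle (d m) (d g') by apply: dle_trans hg'.
have key : forall t, s g' = r t ->
  mul (Shs (comp g' t)) (mul (mul (Sh l) (Shs m)) (Sh (comp g' t))) =
  if (pre g' (d l) == l) && (pre g' (d m) == m) then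
    mul (Shs (comp (suf g' (d l)) t)) (Sh (comp (suf g' (d m)) t)) else 0.
  move=> t ht.
  have hl' : dle (d l) (d (comp g' t)) by rewrite kcomp_d //; apply: dle_trans hl (dle_add _ _).
  have hm' : dle (d m) (d (comp g' t)) by rewrite kcomp_d //; apply: dle_trans hm (dle_add _ _).
  rewrite -nua_mulA nua_mulA Shs_Sh_pre // Shs_Sh_pre' //.
  have [-> ->] := fac_compl ht hl; have [-> ->] := fac_compl ht hm.
  case: eqP => _; last by rewrite nmul0l.
  by case: eqP => _; rewrite ?nmul0r.
case: (d l =P d m) => hd.
  exists a0; split=> //.
  exists (if (pre g' (d l) == l) && (pre g' (d m) == m) then 1 else 0) => be hb.
  have ht : s g' = r be by rewrite /g' kcomp_s.
  rewrite key //; case: ifP => _; last by rewrite scale0r.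
  rewrite hd KP3g ?eqxx ?scale1r ?kcomp_s //; by rewrite suf_s // /g' kcomp_s.
have hsx : s (suf g' (d l)) = s (suf g' (d m)) by rewrite !suf_s.
have hdx : d (suf g' (d l)) <> d (suf g' (d m)).
  rewrite !suf_d // => e; apply: hd; apply: degP => i.
  have := congr1 (fun f : deg k => f i) e; have := hl i; have := hm i.
  rewrite /= !ffunE; lia.
have [a1 [h11 h12]] := Apx hsx hdx.
have hs1 : s a0 = r a1 by rewrite h11 suf_s // /g' kcomp_s.
exists (comp a0 a1); split; first by rewrite kcomp_r.
exists 0 => be hb; rewrite scale0r.
rewrite kcomp_s // in hb.
have E : comp (comp g (comp a0 a1)) be = comp g' (comp a1 be).
  have f1 : s g = r a0 by [].
  have f2 : s g' = r a1 by rewrite /g' kcomp_s.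
  have f3 : s a1 = r be by [].
  by rewrite -(kcomp_assoc f1 hs1) -/g' (kcomp_assoc f2 f3).
rewrite E key ?kcomp_r ?/g' ?kcomp_s //.
case: ifP => // _.
have hx1 : s (suf g' (d l)) = r a1 by rewrite h11.
have hy1 : s (suf g' (d m)) = r a1 by rewrite h11 hsx.
have f3 : s a1 = r be by rewrite hb.
rewrite -(kcomp_assoc hx1 f3) -(kcomp_assoc hy1 f3).
rewrite ShsSh_split ?kcomp_s //.
by rewrite h12 nmul0l nmul0r.
Qed.

Lemma Good_all : KP_generated p S Sstar -> forall a, Good a.
Proof.
move=> hg a; elim: (all_span hg a) => [|l m|a1 a2 _ IH1 _ IH2|x a1 _ IH].
- exact: Good0.
- exact: Good_mono.
- exact: GoodD.
- exact: GoodZ.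
Qed.

Definition eF (F : seq P) := \sum_(u <- F) p u.
Definition vlist (F : seq P) := uniq F /\ forall u, u \in F -> vertex u.

Lemma eF_pl F u : vlist F -> u \in F -> mul (eF F) (p u) = p u.
Proof.
move=> [hu hv] hin; rewrite /eF mul_suml (bigD1_seq u) //= (p_idem (hv u hin)).
rewrite big1_seq ?addr0 // => w /andP [hw win].
by apply: p_orth; [apply: hv | apply: hv | apply/eqP].
Qed.
Lemma eF_pr F u : vlist F -> u \in F -> mul (p u) (eF F) = p u.
Proof.
move=> [hu hv] hin; rewrite /eF mul_sumr (bigD1_seq u) //= (p_idem (hv u hin)).
rewrite big1_seq ?addr0 // => w /andP [hw win].
apply: p_orth; [apply: hv | apply: hv | move=> e; move/eqP: hw; rewrite e]=> //.
Qed.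
Lemma eF_out F v : vlist F -> vertex v -> v \notin F -> mul (p v) (eF F) = 0.
Proof.
move=> [hu hv] vv hin; rewrite /eF mul_sumr big1_seq // => w /andP [_ win].
apply: p_orth => //; [apply: hv | move=> e; move: hin; rewrite e win] => //.
Qed.
Lemma eF_sub F F' : vlist F -> vlist F' -> {subset F <= F'} ->
  mul (eF F') (eF F) = eF F /\ mul (eF F) (eF F') = eF F.
Proof.
move=> h h' hs; split.
  rewrite {1}/eF mul_sumr /eF; apply: eq_big_seq => u hu; apply: eF_pl => //; exact: hs.
rewrite {1}/eF mul_suml /eF; apply: eq_big_seq => u hu; apply: eF_pr => //; exact: hs.
Qed.

Definition Sup (a : A) := exists F, vlist F /\ mul (eF F) a = a /\ mul a (eF F) = a.

Lemma Sup_mono F F' a : vlist F -> vlist F' -> {subset F <= F'} ->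
  mul (eF F) a = a /\ mul a (eF F) = a -> mul (eF F') a = a /\ mul a (eF F') = a.
Proof.
move=> h h' hs [e1 e2]; have [f1 f2] := eF_sub h h' hs; split.
  by rewrite -e1 nua_mulA f1.
by rewrite -e2 -nua_mulA f2.
Qed.

Lemma vlist_cat F F' : vlist F -> vlist F' -> vlist (undup (F ++ F')).
Proof.
move=> [_ h] [_ h']; split; first exact: undup_uniq.
by move=> u; rewrite mem_undup mem_cat => /orP [] ?; [apply: h | apply: h'].
Qed.

Lemma Sup_all : KP_generated p S Sstar -> forall a, Sup a.
Proof.
have two : forall u w a, vertex u -> vertex w -> mul (p u) a = a -> mul a (p w) = a -> Sup a.
  move=> u w a hu hw e1 e2; exists (undup [:: u; w]).
  have hl : vlist (undup [:: u; w]).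
    split; first exact: undup_uniq.
    by move=> x; rewrite mem_undup !inE => /orP [] /eqP ->.
  split=> //; split.
    by rewrite -e1 nua_mulA eF_pl // mem_undup mem_head.
  by rewrite -e2 -nua_mulA eF_pr // mem_undup !inE eqxx orbT.
move=> hg; apply: hg.
- by move=> v hv; apply: (two v v) => //; apply: p_idem.
- move=> l hl; have [a1 a2 a3 a4] := KP2b hl; split.
    by apply: (two (r l) (s l)) => //; [apply: vertex_r | apply: vertex_s].
  by apply: (two (s l) (r l)) => //; [apply: vertex_s | apply: vertex_r].
- exists [::]; split; first by split.
  by rewrite nmul0r nmul0l.
- move=> a b [F [hF ha]] [F' [hF' hb]].
  have hc := vlist_cat hF hF'.
  have sl : {subset F <= undup (F ++ F')} by move=> x hx; rewrite mem_undup mem_cat hx.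
  have sr : {subset F' <= undup (F ++ F')} by move=> x hx; rewrite mem_undup mem_cat hx orbT.
  have [e1 e2] := Sup_mono hF hc sl ha.
  have [f1 f2] := Sup_mono hF' hc sr hb.
  exists (undup (F ++ F')); split=> //.
  by rewrite nua_mulDr nua_mulDl e1 e2 f1 f2.
- move=> x a [F [hF [e1 e2]]]; exists F; split=> //.
  by rewrite nua_mulZr nua_mulZl e1 e2.
- move=> a b [F [hF ha]] [F' [hF' hb]].
  have hc := vlist_cat hF hF'.
  have sl : {subset F <= undup (F ++ F')} by move=> x hx; rewrite mem_undup mem_cat hx.
  have sr : {subset F' <= undup (F ++ F')} by move=> x hx; rewrite mem_undup mem_cat hx orbT.
  have [e1 _] := Sup_mono hF hc sl ha.
  have [_ f2] := Sup_mono hF' hc sr hb.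
  exists (undup (F ++ F')); split=> //.
  by rewrite nua_mulA e1 -nua_mulA f2.
Qed.

Lemma hered z (c : R) l : central z -> mul (p (r l)) z = c *: p (r l) ->
  mul (p (s l)) z = c *: p (s l).
Proof.
move=> hz h.
have E : p (s l) = mul (Shs l) (Sh l) by rewrite KP3g // eqxx.
have E2 : mul z (Sh l) = c *: Sh l.
  by rewrite -{1}(Sh_r l) nua_mulA hz h nua_mulZl Sh_r.
by rewrite {1}E -nua_mulA -hz E2 nua_mulZr -E.
Qed.

Lemma satur z (c : R) u : central z -> (0 < k)%N -> row_finite G -> vertex u ->
  (forall l, r l = u -> d l = ones k -> mul (p (s l)) z = c *: p (s l)) ->
  mul (p u) z = c *: p u.
Proof.
move=> hz kp rf hu h.
have hn : ones k <> dzero k.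
  move=> e; have := congr1 (fun f : deg k => f (Ordinal kp)) e; rewrite /= !ffunE.
  done.
have [sq [hsq1 hsq2]] := paths_list (ones k) rf hu.
rewrite (KP4g hu hn hsq1 hsq2) mul_suml scaler_sumr.
apply: eq_big_seq => l /hsq2 [h1 h2].
have E2 : mul z (Shs l) = c *: Shs l.
  by rewrite -{1}(Shs_s l) nua_mulA hz h // nua_mulZl Shs_s.
by rewrite -nua_mulA -hz E2 nua_mulZr.
Qed.
End Alg.

End KPHelpers.
Import KPHelpers.

Theorem theorem4p7 (k : nat) (R : comPzRingType) (G : kgraph k)
    (A : nualg R) (p S Sstar : kpath G -> A) :
  (0 < k)%N -> row_finite G -> no_sources G ->
  is_KP_algebra p S Sstar ->
  (aperiodic G -> cofinal G -> finite_vertices G ->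
     exists one : A,
       (forall a : A, nua_mul A one a = a /\ nua_mul A a one = a) /\
       (forall z : A, central z <-> exists x : R, z = x *: one)) /\
  (cofinal G -> ~ finite_vertices G ->
     forall z : A, central z <-> z = 0).
Proof.
move=> kp rf ns [hfam hgen _]; split.
- move=> ap cof [sq0 hsq0].
  set V := undup [seq v <- sq0 | kd v == dzero k].
  have hVall : forall v, vertex v -> v \in V.
    by move=> v hv; rewrite mem_undup mem_filter hv eqxx /=; apply: hsq0.
  have hV : vlist V.
    split; first exact: undup_uniq.
    by move=> u; rewrite mem_undup mem_filter => /andP [/eqP h _].
  have hone : forall a, nua_mul A (eF p V) a = a /\ nua_mul A a (eF p V) = a.
    move=> a; have [F [hF ha]] := Sup_all hfam hgen a.
    apply: (Sup_mono hfam hF hV) ha => u hu; apply: hVall; exact: hF.2.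
  exists (eF p V); split=> // z; split.
  + move=> hz.
    have [hVe|[v0 v0V]] : V = [::] \/ exists v0, v0 \in V.
      by case: (V) => [|x l]; [left | right; exists x; rewrite mem_head].
      exists 0; rewrite scale0r -(hone z).1 /eF hVe big_nil; exact: nmul0l.
    have hv0 : vertex v0 := hV.2 _ v0V.
    have [al [h1 [c hc]]] := Good_all hfam rf ap ns hgen z v0.
    rewrite (kvert_s hv0) in h1.
    have := hc (ks al) (rs al).
    rewrite -h1 kcomp_idl kcomp_idr ss hz nua_mulA KP3g // eqxx => Hw.
    have Hall := @all_vertices _ _ (fun w => nua_mul A (p w) z = c *: p w) cof
       (ex_intro _ (ks al) (conj (vertex_s al) Hw)) (fun l => hered hfam hz (l := l))
       (fun u hu => satur hfam hz kp rf hu).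
    exists c; rewrite -(hone z).1 /eF mul_suml scaler_sumr.
    apply: eq_big_seq => u hu; apply: Hall; exact: hV.2.
  + move=> [x ->] a.
    rewrite nua_mulZl nua_mulZr (hone a).1 (hone a).2 //.
- move=> cof nfin z; split.
  + move=> hz; have [F [hF [e1 e2]]] := Sup_all hfam hgen z.
    have [v [hv hvF]] : exists v, vertex v /\ v \notin F.
      apply: Classical_Prop.NNPP => hn; apply: nfin; exists F => v hv.
      apply: Classical_Prop.NNPP => hn2; apply: hn; exists v; split=> //.
      by apply/negP.
    have Hv : nua_mul A (p v) z = 0 *: p v.
      by rewrite scale0r -e1 nua_mulA (eF_out hfam) // nmul0l.
    have Hall := @all_vertices _ _ (fun w => nua_mul A (p w) z = 0 *: p w) cof
       (ex_intro _ v (conj hv Hv)) (fun l => hered hfam hz (l := l))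
       (fun u hu => satur hfam hz kp rf hu).
    rewrite -e1 /eF mul_suml big1_seq // => u /andP [_ hu].
    by rewrite Hall ?scale0r //; apply: hF.2.
  + by move=> -> a; rewrite nmul0l nmul0r.
Qed.
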